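(* Let $d\in\mathbb{N}$, $\mathbf{s}=(s_1,\dots,s_d)\in\mathbb{N}^d$, and let each $l_j(n)$ ($1\le j\le d$) be one of $2n$, $2n+1$, $2n-1$. Then \[ \sum_{n_0>n_1\succ n_2\succ\cdots\succ n_d\succ0}\frac{a_{n_0}}{(2n_0-1)\,l_1(n_1)^{s_1}\cdots l_d(n_d)^{s_d}}=\sum_{n_1\succ n_2\succ\cdots\succ n_d\succ0}\frac{a_{n_1}}{l_1(n_1)^{s_1}\cdots l_d(n_d)^{s_d}}, \] where each $\succ$ can be either $\ge$ or $>$ (the same choices on both sides), provided the series is defined.
   Context: $a_0=1$ and $a_n=\frac{1}{4^n}\binom{2n}{n}$ for $n\ge1$; summation indices are nonnegative integers. *)

(* Defs.v *)
From HB Require Import structures.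
From mathcomp Require Import all_boot all_order all_algebra.
From mathcomp Require Import all_classical all_reals.
From mathcomp Require Import ereal numfun esum.
Set Implicit Arguments. Unset Strict Implicit. Unset Printing Implicit Defensive.
Import Order.TTheory GRing.Theory Num.Theory.
Local Open Scope ring_scope.
Local Open Scope classical_set_scope.

Definition acoef (R : realType) (n : nat) : R :=
  if n == 0%N then 1 else ('C(n.*2, n))%:R / 4%:R ^+ n.

Inductive lform := L2n | L2np1 | L2nm1.

Definition leval (R : realType) (l : lform) (n : nat) : R :=
  match l with
  | L2n => (n.*2)%:R
  | L2np1 => (n.*2)%:R + 1
  | L2nm1 => (n.*2)%:R - 1
  end.

Definition succr (b : bool) (m n : nat) : bool :=
  if b then (n < m)%N else (n <= m)%N.

(* For ns = [:: n_1; ...; n_d], the j-th index n_j (1 <= j <= d) is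
   idx ns j; idx ns (d+1) = 0 plays the role of the final "0". *)
Definition idx (ns : seq nat) (j : nat) : nat := nth 0%N ns j.-1.

Definition chain_set (d : nat) (r : nat -> bool) : set (seq nat) :=
  [set ns | size ns = d /\
            forall j, (1 <= j <= d)%N -> succr (r j) (idx ns j) (idx ns j.+1)].

Definition denom (R : realType) (d : nat) (l : nat -> lform) (s : nat -> nat)
  (ns : seq nat) : R :=
  \prod_(1 <= j < d.+1) leval R (l j) (idx ns j) ^+ s j.

Definition chain_set0 (d : nat) (r : nat -> bool) : set (seq nat) :=
  [set m | exists n0 ns, m = n0 :: ns /\ (idx ns 1 < n0)%N /\ chain_set d r ns].

Definition termR (R : realType) d l s (ns : seq nat) : \bar R :=
  (acoef R (idx ns 1) / denom R d l s ns)%:E.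

Definition termL (R : realType) d l s (m : seq nat) : \bar R :=
  (acoef R (head 0%N m) /
     ((((head 0%N m).*2)%:R - 1) * denom R d l s (behead m)))%:E.

Definition ssum (T : choiceType) (R : realType) (D : set T) (f : T -> \bar R)
  : \bar R := (\esum_(x in D) f^\+ x - \esum_(x in D) f^\- x)%E.

(* Main.v *)
Require Import Defs.
From HB Require Import structures.
From mathcomp Require Import all_boot all_order all_algebra.
From mathcomp Require Import all_classical all_reals.
From mathcomp Require Import ereal numfun esum.
From mathcomp Require Import topology normedtype sequences realfun.
From mathcomp Require Import lra zify ring.
Import Order.TTheory GRing.Theory Num.Theory.
Import numFieldNormedType.Exports.
Local Open Scope ring_scope.
Local Open Scope classical_set_scope.

Section AA.
Variable R : realType.
Definition bb (n : nat) : R := ('C(n.*2, n))%:R / 4%:R ^+ n.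
Definition cc (n : nat) : R := bb n / ((n.*2)%:R - 1).

Lemma binrec n : (n.+1 * 'C(n.+1.*2, n.+1) = 2 * n.*2.+1 * 'C(n.*2, n))%N.
Proof.
have h1 := mul_bin_diag (n.*2.+2) n.
have h2 := mul_bin_down (n.*2.+1) n.
rewrite /= in h1 h2.
have e : (n.*2.+1 - n = n.+1)%N by rewrite -addnn; lia.
rewrite e in h2.
have : (n.+1 * (n.+1 * 'C(n.+1.*2, n.+1)) = n.+1 * (2 * n.*2.+1 * 'C(n.*2, n)))%N.
  rewrite doubleS -h1 mulnCA -h2. rewrite -addnn; lia.
by move/eqP; rewrite eqn_pmul2l // => /eqP.
Qed.

Lemma bb_ge0 n : 0 <= bb n.
Proof. by rewrite /bb divr_ge0 // exprn_ge0. Qed.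

Lemma bbS n : bb n.+1 = bb n * (n.*2.+1)%:R / (n.*2.+2)%:R.
Proof.
rewrite /bb.
have h := binrec n.
have -> : ('C(n.+1.*2, n.+1))%:R = (2 * n.*2.+1 * 'C(n.*2, n))%:R / (n.+1)%:R :> R.
  by rewrite -h natrM mulrAC mulfV ?mul1r // pnatr_eq0.
rewrite !natrM exprS.
have h4 : (4%:R : R) != 0 by rewrite pnatr_eq0.
have h5 : ((n.+1)%:R : R) != 0 by rewrite pnatr_eq0.
have h6 : ((n.*2.+2)%:R : R) = 2 * (n.+1)%:R by rewrite -natrM; congr (_%:R); rewrite -mul2n; lia.
rewrite h6.
have h7 : (4%:R ^+ n : R) != 0 by rewrite expf_neq0.
field. by rewrite h7 andbT addrC natr1.
Qed.

Lemma ccS n : cc n.+1 = bb n - bb n.+1.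
Proof.
rewrite /cc bbS.
have -> : ((n.+1.*2)%:R - 1 : R) = (n.*2.+1)%:R.
  by rewrite doubleS -addn1 natrD addrK.
have h5 : ((n.*2.+1)%:R : R) != 0 by rewrite pnatr_eq0.
have h6 : ((n.*2.+2)%:R : R) = (n.*2.+1)%:R + 1 by rewrite -addn1 natrD.
rewrite h6; field.
have p : (0:R) <= (n.*2)%:R by []. by apply/andP; split; apply/eqP; lra.
Qed.

Lemma cc_ge0 n : (0 < n)%N -> 0 <= cc n.
Proof. by case: n => // n _; rewrite ccS subr_ge0 bbS ler_pdivrMr ?ltr0n // ler_wpM2l ?bb_ge0 // ler_nat. Qed.

Lemma tele m n : \sum_(m.+1 <= i < m.+1 + n) cc i = bb m - bb (m + n).
Proof.
elim: n => [|n IH]; first by rewrite !addn0 big_geq // subrr.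
rewrite addnS big_nat_recr /=; last by rewrite leq_addr.
by rewrite IH ccS -addnS addrA subrK addnS.
Qed.

Lemma bb_sq n : bb n ^+ 2 * (n.*2.+1)%:R <= 1.
Proof.
elim: n => [|n IH]; first by rewrite /bb /= bin0 expr0 divr1 expr1n mul1r.
apply: le_trans IH.
rewrite bbS.
have := bb_ge0 n; move: (bb n) => x x0.
have -> : (n.+1.*2.+1)%:R = (n.*2.+1)%:R + 2 :> R by rewrite doubleS -addn2 natrD.
have -> : (n.*2.+2)%:R = (n.*2.+1)%:R + 1 :> R by rewrite -addn1 natrD.
move: (n.*2.+1)%:R (ltr0Sn R (n.*2)) => y y0.
have -> : (x * y / (y + 1)) ^+ 2 * (y + 2) = x ^+ 2 * (y ^+ 2 * (y + 2) / (y + 1) ^+ 2).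
  by rewrite expr_div_n exprMn; rewrite mulrAC -!mulrA; congr (_ * _); rewrite mulrC -!mulrA; congr (_ * _); rewrite mulrC.
rewrite ler_wpM2l ?exprn_ge0 //.
rewrite ler_pdivrMr; last by rewrite exprn_gt0 //; lra.
nra.
Qed.
Lemma bb_cvg0 : bb @ \oo --> (0:R).
Proof.
have h2 : (fun n => bb n ^+ 2) @ \oo --> (0:R).
  apply: (@squeeze_cvgr _ _ _ _ (fun=> 0) harmonic); last 2 first.
  - exact: cvg_cst.
  - exact: cvg_harmonic.
  apply: nearW => n; rewrite exprn_ge0 ?bb_ge0 //=.
  have := bb_sq n; rewrite -ler_pdivlMr ?ltr0n // mul1r => /le_trans; apply.
  by rewrite lef_pV2 ?posrE ?ltr0n // ler_nat -addnn; lia.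
have : (Num.sqrt \o (fun n => bb n ^+ 2)) @ \oo --> Num.sqrt (0:R).
  apply: continuous_cvg => //; exact: sqrt_continuous.
rewrite sqrtr0; apply: cvg_trans; apply: near_eq_cvg; apply: nearW => n /=.
by rewrite sqrtr_sqr ger0_norm ?bb_ge0.
Qed.

Lemma ccsum m : (\sum_(i <oo | (m < i)%N) (cc i)%:E = (bb m)%:E)%E.
Proof.
rewrite -(eseries_cond _ xpredT) /=.
have -> : (fun n => \sum_(m.+1 <= i < n | true) (cc i)%:E)%E = EFin \o (fun n => \sum_(m.+1 <= i < n) cc i).
  by apply/funext => n /=; rewrite sumEFin.
have cv : (fun n => \sum_(m.+1 <= i < n) cc i) @ \oo --> bb m.
  rewrite -(cvg_shiftn m.+1) /=.
  have -> : (fun n => \sum_(m.+1 <= i < n + m.+1) cc i) = (fun n => bb m - bb (m + n)).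
    by apply/funext => n; rewrite addnC tele.
  suff : (fun n => bb m - bb (m + n)) @ \oo --> bb m - 0 by rewrite subr0.
  apply: cvgB; first exact: cvg_cst.
  have := bb_cvg0; rewrite -(cvg_shiftn m) /=.
  by under eq_fun do rewrite addnC.
by rewrite EFin_lim ?(cvg_lim _ cv) //; apply/cvg_ex; exists (bb m).
Qed.

Lemma acoefE n : acoef R n = bb n.
Proof. by case: n => // ; rewrite /acoef /bb /= bin0 expr0 divr1. Qed.

Lemma core d r (h : seq nat -> R) : (forall ns, 0 <= h ns) ->
  \esum_(m in chain_set0 d r) (cc (head 0%N m) * h (behead m))%:E =
  \esum_(ns in chain_set d r) (bb (idx ns 1) * h ns)%:E.
Proof.
move=> h0.
have E : chain_set0 d r = (fun p : seq nat * nat => p.2 :: p.1) @`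
   (chain_set d r `*`` (fun ns => [set n0 | (idx ns 1 < n0)%N])).
  apply/seteqP; split => m /=.
    by move=> [n0 [ns [-> [H1 H2]]]]; exists (ns, n0).
  by move=> [[ns n0] [/= H1 H2] <-]; exists n0, ns.
rewrite E esum_image; last by move=> [a b] [c e] _ _ /= [-> ->].
rewrite -(@esum_esum _ _ _ _ _ (fun ns n0 => (cc n0 * h ns)%:E)) /=; last first.
  move=> ns n0 _ /= H; rewrite lee_fin mulr_ge0 ?cc_ge0 //.
  exact: leq_ltn_trans H.
apply: eq_esum => ns _ /=.
rewrite -(@nneseries_esum _ _ (fun j => (idx ns 1 < j)%N)); last first.
  move=> n0 H; rewrite lee_fin mulr_ge0 ?cc_ge0 //.
  exact: leq_ltn_trans H.
under eq_fun do under eq_bigr do rewrite mulrC EFinM.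
rewrite nneseriesZl; last by move=> i H; rewrite lee_fin cc_ge0 //; exact: leq_ltn_trans H.
by rewrite ccsum -EFinM mulrC.
Qed.
End AA.

Theorem theorem5p2 (R : realType) (d : nat) (s : nat -> nat)
  (l : nat -> lform) (r : nat -> bool) :
  (0 < d)%N ->
  (forall ns, chain_set d r ns -> denom R d l s ns != 0) ->
  summable (chain_set d r) (termR R d l s) ->
  summable (chain_set0 d r) (termL R d l s) /\
  ssum (chain_set0 d r) (termL R d l s) = ssum (chain_set d r) (termR R d l s).
Proof.
move=> _ _ HS.
set g := fun ns => (denom R d l s ns)^-1.
have eL m : termL R d l s m = (cc R (head 0%N m) * g (behead m))%:E.
  by rewrite /termL /cc acoefE invfM mulrA.
have eR ns : termR R d l s ns = (bb R (idx ns 1) * g ns)%:E.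
  by rewrite /termR acoefE.
have hpos m : chain_set0 d r m -> (0 < head 0%N m)%N.
  by move=> [n0 [ns [-> [H _]]]] /=; exact: leq_ltn_trans H.
have key (F : R -> R) : (forall x, 0 <= F x) -> (forall c x, 0 <= c -> F (c * x) = c * F x) ->
  \esum_(m in chain_set0 d r) (F (cc R (head 0%N m) * g (behead m)))%:E =
  \esum_(ns in chain_set d r) (F (bb R (idx ns 1) * g ns))%:E.
  move=> F0 FM.
  transitivity (\esum_(m in chain_set0 d r) (cc R (head 0%N m) * F (g (behead m)))%:E).
    by apply: eq_esum => m /hpos H; rewrite FM // cc_ge0.
  rewrite (@core R d r (fun ns => F (g ns))) //.
  by apply: eq_esum => ns _; rewrite FM // bb_ge0.
have Fp (c x : R) : 0 <= c -> Num.max (c * x) 0 = c * Num.max x 0.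
  by move=> c0; rewrite maxr_pMr // mulr0.
have Fn (c x : R) : 0 <= c -> Num.max (- (c * x)) 0 = c * Num.max (- x) 0.
  by move=> c0; rewrite -mulrN maxr_pMr // mulr0.
have Fa (c x : R) : 0 <= c -> `|c * x| = c * `|x|.
  by move=> c0; rewrite normrM ger0_norm.
have le_max_r_tmp (x : R) : 0 <= Num.max x 0 by rewrite le_max lexx orbT.
have le_max_r_tmp2 (x : R) : 0 <= Num.max (- x) 0 by rewrite le_max lexx orbT.
have kp := key (fun x => Num.max x 0) (fun x => le_max_r_tmp x) Fp.
have kn := key (fun x => Num.max (- x) 0) le_max_r_tmp2 Fn.
have ka := key (fun x => `|x|) (fun x => normr_ge0 _) Fa.
have ea : (\esum_(m in chain_set0 d r) `|termL R d l s m|)%E =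
          (\esum_(ns in chain_set d r) `|termR R d l s ns|)%E.
  transitivity (\esum_(m in chain_set0 d r) (`|cc R (head 0%N m) * g (behead m)|)%:E).
    by apply: eq_esum => m _; rewrite eL.
  by rewrite ka; apply: eq_esum => ns _; rewrite eR.
split; first by rewrite /summable ea.
rewrite /ssum.
congr (_ - _)%E.
  transitivity (\esum_(m in chain_set0 d r) (Num.max (cc R (head 0%N m) * g (behead m)) 0)%:E).
    by apply: eq_esum => m _; rewrite funeposE eL EFin_max.
  by rewrite kp; apply: eq_esum => ns _; rewrite funeposE eR EFin_max.
transitivity (\esum_(m in chain_set0 d r) (Num.max (- (cc R (head 0%N m) * g (behead m))) 0)%:E).
  by apply: eq_esum => m _; rewrite funenegE eL EFin_max EFinN.
by rewrite kn; apply: eq_esum => ns _; rewrite funenegE eR EFin_max EFinN.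
Qed.
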